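(* Let $\mathcal{X},\mathcal{Y}$ be finite sets, $P_X$ a probability distribution on $\mathcal{X}$, $d:\mathcal{X}\times\mathcal{Y}\to[0,\infty)$ a distortion function, and $Q_Y$ a probability distribution on $\mathcal{Y}$. Let $R\ge 0$ be such that $e^R$ is an integer, and let $M=e^R+1$. Let $X\sim P_X$ and let $Y_0,\dots,Y_{M-1}$ be i.i.d. with law $Q_Y$, independent of $X$. Then $$\mathbb{E}\Big[\min_{0\le i\le M-1} d(X,Y_i)\Big]=\int_0^1 \tilde D(w,Q_Y)\,G_M'(w)\,dw,$$ where $G_M(w)=-(1-w)^{M-1}\big((M-1)w+1\big)$ and $\tilde D(w,Q_Y)$ is as defined in the context.
   Context: For $x\in\mathcal{X}$, $y\in\mathcal{Y}$, $u\in[0,1]$ let $p_{c,x,y,u}=Q_Y\{y': d(x,y')<d(x,y)\}+u\cdot Q_Y\{y': d(x,y')=d(x,y)\}$. For $w\in(0,1]$ define $$\tilde D(w,Q_Y)=w^{-1}\,\mathbb{E}\big[d(X,Y)\,\mathbf{1}\{p_{c,X,Y,U}\le w\}\big],$$ where $X\sim P_X$, $Y\sim Q_Y$ and $U$ uniform on $[0,1]$ are independent. *)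

(* Defs.v *)
From HB Require Import structures.
From mathcomp Require Import all_boot all_order all_algebra.
From mathcomp Require Import all_classical all_reals all_analysis.
Set Implicit Arguments. Unset Strict Implicit. Unset Printing Implicit Defensive.
Import Order.TTheory GRing.Theory Num.Theory.
Local Open Scope ring_scope.
Local Open Scope classical_set_scope.

Section Defs.
Variables (R : realType) (X Y : finType).

Definition pc (Q : Y -> R) (d : X -> Y -> R) (x : X) (y : Y) (u : R) : R :=
  \sum_(y' : Y | d x y' < d x y) Q y' + u * \sum_(y' : Y | d x y' == d x y) Q y'.

(* Dtilde(w,Q_Y) = w^-1 E[ d(X,Y) 1{p_{c,X,Y,U} <= w} ],
   X ~ P, Y ~ Q, U ~ Uniform[0,1] independent: the expectation is
   sum over x, y of P x * Q y * (integral over u in [0,1] w.r.t. Lebesgue). *)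
Definition Dtilde (P : X -> R) (Q : Y -> R) (d : X -> Y -> R) (w : R) : R :=
  w^-1 * \sum_(x : X) \sum_(y : Y)
    P x * Q y * Rintegral lebesgue_measure `[0%R, 1%R]
      (fun u : R => d x y * ((pc Q d x y u <= w)%R)%:R).

Definition GM (M : nat) (w : R) : R :=
  - ((1 - w) ^+ (M.-1) * ((M.-1)%:R * w + 1)).

(* E[ min_{0<=i<=M-1} d(X, Y_i) ] with X ~ P and Y_0..Y_{M-1} iid ~ Q,
   independent of X, as a finite sum over the joint law. M = n.+1. *)
Definition Emin (n : nat) (P : X -> R) (Q : Y -> R) (d : X -> Y -> R) : R :=
  \sum_(x : X) \sum_(ys : {ffun 'I_n.+1 -> Y})
    P x * (\prod_(i < n.+1) Q (ys i)) *
    \big[Num.min/d x (ys ord0)]_(i < n.+1) d x (ys i).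

End Defs.

(* Main.v *)
Require Import Defs.
From HB Require Import structures.
From mathcomp Require Import all_boot all_order all_algebra.
From mathcomp Require Import all_classical all_reals all_analysis.
From mathcomp Require Import ring lra.
Import Order.TTheory GRing.Theory Num.Theory.
Import numFieldTopology.Exports numFieldNormedType.Exports.
Local Open Scope ring_scope.
Local Open Scope classical_set_scope.

Section Comb.
Variable R : realFieldType.

Definition ind {N} (f : 'I_N -> R) (j i : 'I_N) : R :=
  if (i < j)%N then ((f j < f i)%R)%:R else if i == j then 1 else ((f j <= f i)%R)%:R.

Lemma argmin_sum N (f : 'I_N.+1 -> R) :
  \sum_(j < N.+1) f j * \prod_(i < N.+1) ind f j i = \big[Num.min/f ord0]_(i < N.+1) f i.
Proof.
have [i0 _ hi0] := @arg_minP _ R _ ord0 xpredT f isT.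
set m := f _ in hi0.
have hm : forall i, m <= f i by move=> i; exact: hi0.
have -> : \big[Num.min/f ord0]_(i < N.+1) f i = m.
  apply/le_anti/andP; split; first exact: bigmin_le.
  by apply/bigmin_geP; split => // i _; exact: hm.
have [j0 /eqP fj0 hj0] := @arg_minnP _ i0 (fun j => f j == m) (fun j => nat_of_ord j) (eqxx _).
rewrite (bigD1 j0) //=.
have -> : \prod_(i < N.+1) ind f j0 i = 1.
  apply: big1 => i _; rewrite /ind fj0.
  have [ij0|j0i] := ltnP i j0.
    have fi : f i != m by apply/negP => /hj0; rewrite leqNgt ij0.
    by rewrite lt_neqAle eq_sym fi hm.
  by case: eqP => // _; rewrite hm.
rewrite mulr1 fj0 big1 ?addr0 // => j nj.
rewrite (bigD1 j0) //= {1}/ind.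
have [jj0|jj0] := ltnP j0 j.
  by rewrite fj0 ltNge hm /= mul0r mulr0.
have jj0' : (j < j0)%N by rewrite ltn_neqAle jj0 andbT; apply: contra nj => /eqP h; apply/eqP/val_inj.
have fj : f j != m by apply/negP => /hj0; rewrite leqNgt jj0'.
rewrite (_ : (j0 == j) = false); last by apply/negbTE; rewrite eq_sym.
by rewrite fj0 leNgt lt_neqAle eq_sym fj hm /= mul0r mulr0.
Qed.

Lemma prod_lt N j (A B C : R) : (N <= j)%N ->
  \prod_(i < N) (if (i < j)%N then A else if (i : nat) == j then B else C) = A ^+ N.
Proof.
elim: N => [|N IH] hN; first by rewrite big_ord0 expr0.
rewrite big_ord_recr /= IH ?(ltnW hN) // hN exprSr.
by [].
Qed.

Lemma prod_ind N j (A B C : R) : (j < N)%N ->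
  \prod_(i < N) (if (i < j)%N then A else if (i : nat) == j then B else C)
  = A ^+ j * B * C ^+ (N.-1 - j).
Proof.
elim: N => [|N IH] hN //.
rewrite big_ord_recr /=.
have [jN|jN] := ltnP j N.
  rewrite IH // ltnNge (ltnW jN) /= (_ : (N == j) = false); last first.
    by apply/negbTE; rewrite neq_ltn jN orbT.
  rewrite -mulrA -exprSr; congr (_ * _ ^+ _).
  by case: N jN {IH hN} => // N jN /=; rewrite subSn.
have -> : j = N by apply/eqP; rewrite eqn_leq jN -ltnS hN.
by rewrite prod_lt // ltnn eqxx subnn expr0 mulr1.
Qed.

Variables (Y : finType) (Q e : Y -> R) (n : nat).

Definition FF (j : 'I_n.+1) (y : Y) (i : 'I_n.+1) (y' : Y) : R :=
  Q y' * (if (i < j)%N then ((e y < e y')%R)%:R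
          else if i == j then (y' == y)%:R else ((e y <= e y')%R)%:R).

Lemma step1 (ys : {ffun 'I_n.+1 -> Y}) :
  (\prod_(i < n.+1) Q (ys i)) * \big[Num.min/e (ys ord0)]_(i < n.+1) e (ys i)
  = \sum_(j < n.+1) \sum_y e y * \prod_(i < n.+1) FF j y i (ys i).
Proof.
rewrite -(@argmin_sum n (fun i => e (ys i))) big_distrr; apply: eq_bigr => j _ /=.
rewrite (bigD1 (ys j)) //= [X in _ = _ + X]big1 ?addr0; last first.
  move=> y ny; rewrite (bigD1 j) //= /FF ltnn eqxx.
  have -> : (ys j == y) = false by apply/negbTE; rewrite eq_sym.
  by rewrite mulr0 mul0r mulr0.
rewrite /FF big_split /= mulrCA; congr (_ * (_ * _)).
apply: eq_bigr => i _; rewrite /ind.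
case: ltnP => // _; case: eqP => [->|] //; by rewrite eqxx.
Qed.

Definition Gt (y : Y) := \sum_(y' | (e y < e y')%R) Q y'.
Definition Ge (y : Y) := \sum_(y' | (e y <= e y')%R) Q y'.

Lemma sum_cond (P : pred Y) : \sum_y' Q y' * (P y')%:R = \sum_(y' | P y') Q y'.
Proof.
rewrite [RHS]big_mkcond; apply: eq_bigr => y' _.
by case: (P y'); rewrite ?mulr1 ?mulr0.
Qed.

Lemma comb :
  \sum_(ys : {ffun 'I_n.+1 -> Y})
     (\prod_(i < n.+1) Q (ys i)) * \big[Num.min/e (ys ord0)]_(i < n.+1) e (ys i)
  = \sum_y Q y * e y * \sum_(j < n.+1) Gt y ^+ j * Ge y ^+ (n - j).
Proof.
under eq_bigr do rewrite step1.
rewrite exchange_big /=.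
under eq_bigr do rewrite exchange_big /=.
under eq_bigr do under eq_bigr do rewrite -big_distrr /= -bigA_distr_bigA /=.
transitivity (\sum_(j < n.+1) \sum_y e y * (Gt y ^+ j * Q y * Ge y ^+ (n - j))).
  apply: eq_bigr => j _; apply: eq_bigr => y _; congr (_ * _).
  rewrite -(@prod_ind n.+1 j _ _ _ (ltn_ord j)) /=.
  apply: eq_bigr => i _; rewrite /FF.
  case: ltnP => _; first by rewrite sum_cond.
  case: eqP => [->|ij].
    by rewrite eqxx sum_cond big_pred1_eq.
  have -> : ((i : nat) == j) = false by apply/eqP => h; apply: ij; apply: val_inj.
  by rewrite sum_cond.
rewrite exchange_big /=; apply: eq_bigr => y _.
rewrite big_distrr /=; apply: eq_bigr => j _; ring.
Qed.

End Comb.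

Section A.
Variable R : realType.
Notation mu := (@lebesgue_measure R).

Lemma poly_FTC (p : {poly R}) (a b : R) : a < b ->
  \int[mu]_(x in `[a, b]) (p^`()).[x] = p.[b] - p.[a].
Proof.
move=> ab; rewrite /Rintegral.
have c1 : {within `[a, b], continuous (fun x : R => (p^`()).[x])}.
  by apply: continuous_in_subspaceT => x _; exact: continuous_horner.
have c2 : derivable_oo_LRcontinuous (horner p) a b.
  split.
  + by move=> x _; exact: derivable_horner.
  + by apply: cvg_at_right_filter; exact: continuous_horner.
  + by apply: cvg_at_left_filter; exact: continuous_horner.
have c3 : {in `]a, b[%R, (horner p)^`() =1 (fun x : R => (p^`()).[x])}.
  by move=> x _; rewrite -derivE.
by rewrite (continuous_FTC2 ab c1 c2 c3).
Qed.
Lemma cont_int (f : R -> R) (a b : R) : continuous f ->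
  mu.-integrable `[a, b] (EFin \o f).
Proof.
move=> cf; apply: continuous_compact_integrable.
  exact: segment_compact.
exact: continuous_subspaceT.
Qed.
Definition gg (m : nat) (w : R) : R := (m.+1 * m.+2)%:R * (1 - w) ^+ m.

Lemma gg_cont m : continuous (gg m).
Proof.
move=> w; rewrite /gg.
have -> : (fun w : R => (m.+1 * m.+2)%:R * (1 - w) ^+ m) =
   horner ((m.+1 * m.+2)%:R%:P * (1 - 'X) ^+ m).
  by apply/funext => y; rewrite !hornerE.
exact: continuous_horner.
Qed.

Lemma dpow k : deriv ((1 - 'X)^+k) = - (k%:R)%:P * (1 - 'X)^+k.-1 :> {poly R}.
Proof.
rewrite deriv_exp derivB derivX -polyC1 derivC sub0r polyC1.
by rewrite -mulrnAr -mulr_natl -polyC_natr mulN1r mulNr.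
Qed.

Lemma L2 (m : nat) (c : R) : 0 <= c -> c <= 1 ->
  \int[mu]_(w in `[0, 1]) (gg m w * Num.max 0 (w - c)) = (1 - c) ^+ m.+2.
Proof.
move=> c0 c1.
have cf : continuous (fun w => gg m w * Num.max 0 (w - c)).
  move=> w; apply: continuousM; first exact: gg_cont.
  have h : continuous ((cst (0:R)) \max (fun w : R => w - c)).
    apply: max_fun_continuous; first exact: cst_continuous.
    by move=> x; apply: continuousB => //; exact: cst_continuous.
  exact: h.
have [->|c1'] := eqVneq c 1.
  rewrite subrr expr0n /=.
  rewrite (@eq_Rintegral _ _ _ _ _ (cst 0)); last first.
    move=> w; rewrite inE /= in_itv /= => /andP[_ w1].
    by rewrite /cst (_ : Num.max 0 (w - 1) = 0) ?mulr0 // max_l // subr_le0.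
  by rewrite Rintegral_cst //= mul0r.
have c1s : c < 1 by rewrite lt_neqAle c1'.
have I01 := @cont_int _ 0 1 cf.
have := @Rintegral_itvB R _ (BLeft 0) (BRight 1) c I01.
rewrite !bnd_simp => /(_ c0 c1) E.
have E0 : \int[mu]_(w in `[0, c]) (gg m w * Num.max 0 (w - c)) = 0.
  rewrite (@eq_Rintegral _ _ _ _ _ (cst 0)); last first.
    move=> w; rewrite inE /= in_itv /= => /andP[_ w1].
    by rewrite /cst (_ : Num.max 0 (w - c) = 0) ?mulr0 // max_l // subr_le0.
  by rewrite Rintegral_cst //= mul0r.
rewrite E0 subr0 in E; rewrite E.
rewrite Rintegral_itv_obnd_cbnd; last first.
  apply: integrableS I01 => //; apply: subset_itv; rewrite bnd_simp //.
pose K : {poly R} := - (m.+2%:R *: ((1 - 'X) ^+ m.+1 * ('X - c%:P))) - (1 - 'X) ^+ m.+2.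
transitivity (\int[mu]_(x in `[c, 1]) (K^`()).[x]).
  apply: eq_Rintegral => w; rewrite inE /= in_itv /= => /andP[cw _].
  rewrite /K /gg (max_r (_ : 0 <= w - c)) ?subr_ge0 //.
  rewrite derivB derivN derivZ derivM !dpow derivXsubC.
  by rewrite !hornerE /= natrM exprS; ring.
rewrite poly_FTC // /K !hornerE /= subrr !expr0n /=; ring.
Qed.
Lemma clampE (a b w : R) : 0 < b ->
  Num.min 1 (Num.max 0 ((w - a) / b)) = (Num.max 0 (w - a) - Num.max 0 (w - a - b)) / b.
Proof.
move=> b0.
have [wa|aw] := lerP w a.
  have h1 : (w - a) / b <= 0 by rewrite pmulr_lle0 ?invr_gt0 // subr_le0.
  rewrite (max_l h1) (max_l (_ : w - a <= 0)) ?subr_le0 //.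
  rewrite (max_l (_ : w - a - b <= 0)); last by lra.
  by rewrite subrr mul0r min_r.
have [wab|abw] := lerP w (a + b).
  have h1 : 0 <= (w - a) / b by rewrite divr_ge0 // ?subr_ge0 ?ltW.
  have h2 : (w - a) / b <= 1 by rewrite ler_pdivrMr // mul1r; lra.
  rewrite (max_r h1) (min_r h2) (max_r (_ : 0 <= w - a)); last by lra.
  by rewrite (max_l (_ : w - a - b <= 0)) ?subr0 //; lra.
have h1 : 1 <= (w - a) / b by rewrite ler_pdivlMr // mul1r; lra.
rewrite (max_r (le_trans ler01 h1)) (min_l h1).
rewrite (max_r (_ : 0 <= w - a)); last by lra.
rewrite (max_r (_ : 0 <= w - a - b)); last by lra.
by rewrite opprB addrCA subrr addr0 divff // gt_eqF.
Qed.

Lemma meas_clamp (s : R) :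
  mu (`]-oo, s] `&` `[0, 1]) = (Num.min 1 (Num.max 0 s))%:E.
Proof.
have [s0|s0] := ltP s 0.
  have -> : `]-oo, s] `&` `[0, 1] = set0 :> set R.
    apply/seteqP; split => x //=; rewrite !in_itv /= => -[h1 /andP[h2 h3]].
    lra.
  by rewrite measure0 min_r // ler01.
have [s1|s1] := leP s 1.
  have -> : `]-oo, s] `&` `[0, 1] = `[0, s] :> set R.
    apply/seteqP; split => x /=; rewrite !in_itv /=.
      by move=> -[h1 /andP[h2 h3]]; rewrite h2 h1.
    by move=> /andP[h1 h2]; rewrite h1 h2 /=; split => //; lra.
  rewrite lebesgue_measure_itv /= lte_fin.
  have [s0'|h] := ltP 0 s; first by rewrite oppr0 adde0.
  by rewrite (_ : s = 0) //; lra.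
have -> : `]-oo, s] `&` `[0, 1] = `[0, 1] :> set R.
  apply/seteqP; split => x /=; rewrite !in_itv /=.
    by move=> -[h1 /andP[h2 h3]]; rewrite h2 h3.
  by move=> /andP[h1 h2]; rewrite h1 h2 /=; split => //; lra.
by rewrite lebesgue_measure_itv /= lte_fin ltr01 oppr0 adde0.
Qed.

Lemma L1 (dy a b w : R) : 0 <= dy -> 0 < b ->
  Rintegral mu `[0, 1] (fun u : R => dy * ((a + u * b <= w)%R)%:R) =
  dy * ((Num.max 0 (w - a) - Num.max 0 (w - a - b)) / b).
Proof.
move=> d0 b0.
rewrite -clampE //.
pose A : set R := `]-oo, (w - a) / b].
transitivity (Rintegral mu `[0, 1] (fun u : R => dy * \1_A u)).
  apply: eq_Rintegral => u _; rewrite indicE.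
  have -> : (u \in A) = (a + (u : R) * b <= w)%R; last by [].
  rewrite /A mem_setE in_itv /= ler_pdivlMr //.
  by apply/idP/idP => h; lra.
rewrite /Rintegral (@integralZl_indic _ _ _ mu `[0, 1] _ (fun _ => A) dy) //=; last first.
  - exact: measurable_itv.
  - by move=> h; exfalso; lra.
have mA : measurable A by exact: measurable_itv.
rewrite (@integral_indic _ _ _ mu `[0, 1] _ A mA) //=.
by rewrite meas_clamp.
Qed.


Lemma maxc_cont (c : R) : continuous (fun w : R => Num.max 0 (w - c)).
Proof.
have h : continuous ((cst (0:R)) \max (fun w : R => w - c)).
  apply: max_fun_continuous; first exact: cst_continuous.
  by move=> x; apply: continuousB => //; exact: cst_continuous.
exact: h.
Qed.

Definition hh (m : nat) (a b w : R) : R :=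
  gg m w * ((Num.max 0 (w - a) - Num.max 0 (w - (a + b))) / b).

Lemma hh_cont m a b : continuous (hh m a b).
Proof.
move=> w; apply: continuousM; first exact: gg_cont.
apply: continuousM; last exact: cst_continuous.
by apply: continuousB; exact: maxc_cont.
Qed.

Lemma L3 (m : nat) (a b : R) : 0 <= a -> 0 < b -> a + b <= 1 ->
  \int[mu]_(w in `[0, 1]) hh m a b w = ((1 - a) ^+ m.+2 - (1 - a - b) ^+ m.+2) / b.
Proof.
move=> a0 b0 ab1.
have -> : hh m a b = (fun w => b^-1 * (gg m w * Num.max 0 (w - a) - gg m w * Num.max 0 (w - (a + b)))).
  by apply/funext => w; rewrite /hh; ring.
have c1 : continuous (fun w => gg m w * Num.max 0 (w - a)).
  by move=> w; apply: continuousM; [exact: gg_cont|exact: maxc_cont].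
have c2 : continuous (fun w => gg m w * Num.max 0 (w - (a + b))).
  by move=> w; apply: continuousM; [exact: gg_cont|exact: maxc_cont].
have c3 : continuous (fun w : R => gg m w * Num.max 0 (w - a) - gg m w * Num.max 0 (w - (a + b))).
  by move=> w; exact: (continuousB (c1 w) (c2 w)).
rewrite RintegralZl //; last exact: cont_int.
rewrite RintegralB //; try exact: cont_int.
rewrite !L2 //; try lra.
by rewrite opprD addrA mulrC.
Qed.

Lemma cont_sum (I : Type) (s : seq I) (f : I -> R -> R) :
  (forall i, continuous (f i)) -> continuous (fun w => \sum_(i <- s) f i w).
Proof.
move=> cf; elim: s => [|i s IH].
  have -> : (fun w => \sum_(i <- [::]) f i w) = cst 0.
    by apply/funext => w; rewrite big_nil.
  exact: cst_continuous.
have -> : (fun w => \sum_(j <- i :: s) f j w) = (fun w => f i w + \sum_(j <- s) f j w).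
  by apply/funext => w; rewrite big_cons.
by move=> w; apply: continuousD; [exact: cf|exact: IH].
Qed.

Lemma Rint_sum (I : Type) (s : seq I) (f : I -> R -> R) :
  (forall i, continuous (f i)) ->
  \int[mu]_(w in `[0, 1]) (\sum_(i <- s) f i w) =
  \sum_(i <- s) \int[mu]_(w in `[0, 1]) f i w.
Proof.
move=> cf; elim: s => [|i s IH].
  have -> : (fun w => \sum_(i <- [::]) f i w) = cst 0.
    by apply/funext => w; rewrite big_nil.
  by rewrite big_nil Rintegral_cst // mul0r.
have -> : (fun w => \sum_(j <- i :: s) f j w) = (fun w => f i w + \sum_(j <- s) f j w).
  by apply/funext => w; rewrite big_cons.
rewrite RintegralD //; first by rewrite IH big_cons.
- exact: cont_int.
- by apply: cont_int; exact: cont_sum.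
Qed.

Lemma hhZ_cont c m a b : continuous (fun w => c * hh m a b w).
Proof.
move=> w; apply: continuousM; first exact: cst_continuous.
exact: hh_cont.
Qed.

End A.

Arguments gg {R}.
Arguments hh {R}.
Arguments hhZ_cont {R}.
Arguments Ge {R Y}.
Arguments Gt {R Y}.
Arguments comb {R Y}.
Arguments L1 {R}.
Arguments L3 {R}.

Lemma GM_derive (R : realType) (m : nat) (w : R) :
  derive1 (@GM R m.+2) w = w * @gg R m w.
Proof.
pose pG : {poly R} := - ((1 - 'X) ^+ m.+1 * (m.+1%:R *: 'X + 1)).
have -> : @GM R m.+2 = horner pG.
  by apply/funext => x; rewrite /GM /pG !hornerE.
rewrite -derivE /pG derivN derivM dpow derivD derivZ derivX -polyC1 derivC.
rewrite !hornerE /= /gg natrM exprS; ring.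
Qed.

Theorem theorem1 (R : realType) (X Y : finType)
  (P : X -> R) (hP0 : forall x, 0 <= P x) (hP1 : \sum_(x : X) P x = 1)
  (Q : Y -> R) (hQ0 : forall y, 0 <= Q y) (hQ1 : \sum_(y : Y) Q y = 1)
  (d : X -> Y -> R) (hd : forall x y, 0 <= d x y)
  (Rate : R) (hR : 0 <= Rate) (n : nat) (hn : expR Rate = n%:R) :
  let M := n.+1 in
  Emin n P Q d =
  Rintegral lebesgue_measure `[0%R, 1%R]
    (fun w : R => Dtilde P Q d w * derive1 (@GM R M) w).
Proof.
case: n hn => [|m] hn /=.
  have := expR_gt0 Rate; rewrite hn ltxx //.
pose a x y := \sum_(y' | d x y' < d x y) Q y'.
pose b x y := \sum_(y' | d x y' == d x y) Q y'.
have Ge_eq x y : Ge Q (d x) y = 1 - a x y.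
  have h : \sum_y' Q y' = a x y + Ge Q (d x) y.
    rewrite (bigID (fun y' => d x y' < d x y)) /=; congr (_ + _).
    by apply: eq_bigl => y'; rewrite -leNgt.
  by rewrite hQ1 in h; rewrite h; ring.
have Gt_eq x y : Gt Q (d x) y = 1 - a x y - b x y.
  have h : Ge Q (d x) y = b x y + Gt Q (d x) y.
    rewrite /Ge (bigID (fun y' => d x y' == d x y)) /=; congr (_ + _).
      by apply: eq_bigl => y'; case: eqP => [->|]; rewrite ?lexx ?andbF.
    by apply: eq_bigl => y'; rewrite lt_neqAle eq_sym andbC.
  have h2 : Gt Q (d x) y = Ge Q (d x) y - b x y by rewrite h; ring.
  by rewrite h2 Ge_eq.
have ha x y : 0 <= a x y by apply: sumr_ge0 => y' _.
have hGt x y : 0 <= Gt Q (d x) y by apply: sumr_ge0 => y' _.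
have hb x y : Q y <= b x y.
  by rewrite /b (bigD1 y) //= lerDl; apply: sumr_ge0 => y' _.
have hab x y : a x y + b x y <= 1 by have := hGt x y; rewrite Gt_eq; lra.
transitivity (\sum_x P x * \sum_y Q y * d x y *
   \sum_(j < m.+2) Gt Q (d x) y ^+ j * Ge Q (d x) y ^+ (m.+1 - j)).
  rewrite /Emin; apply: eq_bigr => x _.
  rewrite -(comb Q (d x)) big_distrr /=; apply: eq_bigr => ys _.
  by rewrite mulrA.
have hI x y w : P x * Q y * Rintegral lebesgue_measure `[0%R, 1%R]
      (fun u : R => d x y * ((pc Q d x y u <= w)%R)%:R) =
    P x * Q y * d x y * ((Num.max 0 (w - a x y) - Num.max 0 (w - (a x y + b x y))) / b x y).
  have [Q0|Qp] := eqVneq (Q y) 0; first by rewrite Q0 !(mulr0, mul0r).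
  have bp : 0 < b x y by apply: (lt_le_trans _ (hb x y)); rewrite lt_neqAle eq_sym Qp hQ0.
  rewrite /pc L1 // opprD addrA; ring.
have hD w : Dtilde P Q d w * derive1 (@GM R m.+2) w =
    \sum_x \sum_y P x * Q y * d x y * hh m (a x y) (b x y) w.
  rewrite GM_derive /Dtilde.
  under eq_bigr do under eq_bigr do rewrite hI.
  have [->|w0] := eqVneq w 0.
    rewrite mul0r mulr0; symmetry; apply: big1 => x _; apply: big1 => y _.
    have h1 := ha x y; have h2 := hb x y; have h3 := hQ0 y.
    have e1 : Num.max 0 (0 - a x y) = 0 by rewrite max_l //; lra.
    have e2 : Num.max 0 (0 - (a x y + b x y)) = 0 by rewrite max_l //; lra.
    by rewrite /hh e1 e2 subrr mul0r !mulr0.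
  set S := (X in w^-1 * X * _).
  transitivity (S * gg m w); first by field.
  rewrite /S big_distrl; apply: eq_bigr => x _.
  rewrite big_distrl; apply: eq_bigr => y _; rewrite /hh /=; ring.
have -> : (fun w : R => Dtilde P Q d w * derive1 (@GM R m.+2) w) =
    (fun w : R => \sum_x \sum_y P x * Q y * d x y * hh m (a x y) (b x y) w).
  by apply/funext => w; exact: hD.
rewrite Rint_sum; last first.
  by move=> x; apply: cont_sum => y; exact: hhZ_cont.
apply: eq_bigr => x _; rewrite Rint_sum; last first.
  by move=> y; exact: hhZ_cont.
rewrite big_distrr; apply: eq_bigr => y _ /=.
rewrite RintegralZl //; last by apply: cont_int; exact: hh_cont.
have [Q0|Qp] := eqVneq (Q y) 0; first by rewrite Q0 !(mulr0, mul0r).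
have bp : 0 < b x y by apply: (lt_le_trans _ (hb x y)); rewrite lt_neqAle eq_sym Qp hQ0.
rewrite (L3 m _ _ (ha x y) bp (hab x y)).
rewrite Ge_eq Gt_eq subrXX.
have -> : 1 - a x y - (1 - a x y - b x y) = b x y by ring.
have -> : \sum_(i < m.+2) (1 - a x y) ^+ (m.+2.-1 - i) * (1 - a x y - b x y) ^+ i =
    \sum_(j < m.+2) (1 - a x y - b x y) ^+ j * (1 - a x y) ^+ (m.+1 - j).
  by apply: eq_bigr => j _; rewrite mulrC.
have -> : forall S, b x y * S / b x y = S.
  by move=> S; rewrite mulrC mulrA mulVf ?gt_eqF // mul1r.
ring.
Qed.
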